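(* Let $a$ be a global-in-time solution of $$\partial_t a+\Big(\int_{-\pi}^x a(t,\bar x)\,d\bar x\Big)\partial_x a-a^2+\frac1\pi\int_{-\pi}^{\pi}a^2\,dx=0,\qquad \int_{-\pi}^\pi a(t,x)dx=0,\qquad x\in[-\pi,\pi],$$ such that $a(t,\cdot)$ is even for all $t\ge0$, and assume that $\|a(t,\cdot)-\mu\cos(\cdot)\|_{L^\infty([-\pi,\pi])}\to0$ as $t\to\infty$ for some $\mu>0$. Then for all $\kappa_0>0$ and $\delta\in(0,\frac1\mu)$ there exists $\kappa\in(0,\kappa_0)$ such that if $0<|z_0|\le\kappa$ then the characteristic $z$ starting from $z_0$ satisfies $$|z(t)|\le\kappa_0\qquad\text{for all }0\le t\le t_0:=\Big(\frac1\mu-\delta\Big)\ln\Big(\frac{\kappa_0}{|z_0|}\Big).$$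
   Context: The characteristic starting from $z_0$ is the solution of $\dot z(t)=\int_{-\pi}^{z(t)}a(t,x)\,dx$, $z(0)=z_0$. *)

(* Defs.v *)
From Stdlib Require Import Reals.
From Coquelicot Require Import Coquelicot.
Open Scope R_scope.

Definition is_global_solution (a : R -> R -> R) : Prop :=
  (forall t x, 0 <= t -> continuous (fun p : R * R => a (fst p) (snd p)) (t, x)) /\
  (forall t x, 0 < t -> -PI <= x <= PI ->
     exists at_ ax : R,
       is_derive (fun s => a s x) t at_ /\
       is_derive (fun y => a t y) x ax /\
       at_ + RInt (fun y => a t y) (-PI) x * ax - (a t x) ^ 2
           + / PI * RInt (fun y => (a t y) ^ 2) (-PI) PI = 0) /\
  (forall t, 0 <= t -> RInt (fun y => a t y) (-PI) PI = 0).

Definition even_in_x (a : R -> R -> R) : Prop :=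
  forall t x, 0 <= t -> -PI <= x <= PI -> a t (-x) = a t x.

(* || a(t,.) - mu cos ||_{L^oo([-pi,pi])} -> 0 as t -> oo (a(t,.) continuous, so sup norm) *)
Definition converges_to_mu_cos (a : R -> R -> R) (mu : R) : Prop :=
  forall eps, 0 < eps -> exists T, forall t x, T <= t -> -PI <= x <= PI ->
    Rabs (a t x - mu * cos x) <= eps.

Definition is_characteristic (a : R -> R -> R) (z0 : R) (z : R -> R) : Prop :=
  z 0 = z0 /\ forall t, 0 <= t -> is_derive z t (RInt (fun x => a t x) (-PI) (z t)).

(* Main.v *)
Require Import Defs.
From Stdlib Require Import Reals Lra Lia.
From Coquelicot Require Import Coquelicot.
Open Scope R_scope.

Lemma gron (f df : R -> R) (K p q : R) : p <= q ->
  (forall t, p <= t <= q -> is_derive f t (df t)) ->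
  (forall t, p <= t <= q -> df t + K * f t <= 0) ->
  f q * exp (K * (q - p)) <= f p.
Proof.
  intros Hpq Hd Hs.
  set (g := fun t => f t * exp (K * (t - p))).
  set (dg := fun t => (df t + K * f t) * exp (K * (t - p))).
  assert (Hg : forall t, p <= t <= q -> is_derive g t (dg t)).
  { intros t Ht. unfold g, dg.
    assert (He : is_derive (fun t => exp (K * (t - p))) t (K * exp (K * (t - p)))).
    { auto_derive. exact I. unfold Rminus; ring. }
    assert (Hm := is_derive_mult f (fun t => exp (K * (t - p))) t _ _ (Hd t Ht) He
       ltac:(intros; apply Rmult_comm)).
    replace ((df t + K * f t) * exp (K * (t - p))) with
      (plus (mult (df t) (exp (K * (t - p)))) (mult (f t) (K * exp (K * (t - p))))).
    exact Hm.
    unfold plus, mult; simpl. ring. }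
  destruct (MVT_gen g p q dg) as [c [Hc Heq]].
  - intros x Hx. rewrite Rmin_left in Hx by lra. rewrite Rmax_right in Hx by lra.
    apply Hg; lra.
  - intros x Hx. rewrite Rmin_left in Hx by lra. rewrite Rmax_right in Hx by lra.
    apply continuity_pt_filterlim. apply (ex_derive_continuous (K := R_AbsRing) (V := R_NormedModule) g x). eexists. apply Hg; lra.
  - rewrite Rmin_left in Hc by lra. rewrite Rmax_right in Hc by lra.
    unfold g, dg in Heq. replace (K * (p - p)) with 0 in Heq by ring. rewrite exp_0 in Heq.
    assert (0 < exp (K * (c - p))) by apply exp_pos.
    assert (df c + K * f c <= 0) by (apply Hs; lra).
    assert ((df c + K * f c) * exp (K * (c - p)) * (q - p) <= 0).
    { apply Rmult_le_0_r. 2: lra. apply Rmult_le_0_r; lra. }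
    lra.
Qed.

Lemma first_zero (f : R -> R) (t1 : R) : 0 <= t1 ->
  (forall t, 0 <= t <= t1 -> continuity_pt f t) -> 0 < f 0 -> f t1 <= 0 ->
  exists s, 0 < s <= t1 /\ f s = 0 /\ forall r, 0 <= r < s -> 0 < f r.
Proof.
  intros Ht1 Hc H0 H1.
  set (E := fun s => 0 <= s <= t1 /\ forall r, 0 <= r <= s -> 0 < f r).
  assert (HE0 : E 0). { split. lra. intros r Hr. replace r with 0 by lra. exact H0. }
  assert (Hb : bound E). { exists t1. intros s [Hs _]. lra. }
  destruct (completeness E Hb (ex_intro _ 0 HE0)) as [m [Hub Hlub]].
  assert (Hm0 : 0 <= m) by (apply Hub; exact HE0).
  assert (Hm1 : m <= t1) by (apply Hlub; intros s [Hs _]; lra).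
  assert (Hbelow : forall r, 0 <= r < m -> 0 < f r).
  { intros r Hr. destruct (Rle_or_lt m r) as [Hle|Hlt]. lra.
    apply Rnot_le_lt. intro Hfr.
    assert (Hr' : is_upper_bound E r).
    { intros s [Hs Hs']. destruct (Rle_or_lt s r) as [|Hsr]. lra.
      exfalso. assert (0 < f r) by (apply Hs'; lra). lra. }
    specialize (Hlub r Hr'). lra. }
  assert (Hcm := Hc m (conj Hm0 Hm1)).
  destruct (Rtotal_order (f m) 0) as [Hneg | [Hz | Hpos]].
  - exfalso.
    destruct (Hcm (- f m) ltac:(lra)) as [eta [Heta Hd]].
    assert (Hmpos : 0 < m). { destruct Hm0 as [|Hm]. auto. subst m. lra. }
    set (r := Rmax 0 (m - eta/2)).
    assert (0 < f r). { apply Hbelow. unfold r. split. apply Rmax_l.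
      apply Rmax_lub_lt; lra. }
    assert (Hr : R_dist (f r) (f m) < - f m).
    { destruct (Req_dec r m) as [Heq|Hneq].
      - rewrite Heq, R_dist_eq. lra.
      - apply Hd. split. split. exact I. intro; apply Hneq; auto.
        simpl. unfold Rdist, R_dist, r. unfold Rmax. destruct (Rle_dec 0 (m - eta/2)).
        rewrite Rabs_left; lra. rewrite Rabs_left; lra. }
    unfold R_dist in Hr. assert (Habs := Rle_abs (f r - f m)). lra.
  - exists m. split. split. destruct Hm0 as [|Hm]. auto. subst m. lra. auto.
    split; auto.
  - exfalso.
    assert (Hmt : m < t1). { destruct Hm1 as [|Hm]. auto. subst m. lra. }
    destruct (Hcm (f m) Hpos) as [eta [Heta Hd]].
    set (s := Rmin t1 (m + eta/2)).
    assert (Es : E s).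
    { split. unfold s. split. apply Rmin_glb. lra. lra. apply Rmin_l.
      intros r Hr. destruct (Rlt_or_le r m) as [Hrm|Hrm]. apply Hbelow; lra.
      destruct (Req_dec r m) as [Heq|Hneq]. subst r. lra.
      assert (Hr2 : R_dist (f r) (f m) < f m).
      { apply Hd. split. split. exact I. intro; apply Hneq; auto.
        simpl. unfold Rdist, R_dist. rewrite Rabs_right. assert (s <= m + eta/2) by apply Rmin_r. lra. lra. }
      unfold R_dist in Hr2. assert (Habs := Rle_abs (f m - f r)).
      rewrite Rabs_minus_sym in Hr2. lra. }
    specialize (Hub s Es). unfold s in Hub. unfold Rmin in Hub.
    destruct (Rle_dec t1 (m + eta/2)); lra.
Qed.
Lemma rect_bound (f : R -> R -> R) (T c d : R) : 0 <= T -> c <= 0 <= d ->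
  (forall t x, 0 <= t <= T -> c <= x <= d -> continuity_2d_pt f t x) ->
  exists M, forall t x, 0 <= t <= T -> c <= x <= d -> Rabs (f t x) <= M.
Proof.
  intros HT Hcd Hc.
  destruct (uniform_continuity_2d f 0 T c d Hc (mkposreal 1 Rlt_0_1)) as [del Hdel].
  assert (Hdp : 0 < del) by apply cond_pos.
  assert (HX : 0 <= (T + d - c) / del).
  { apply Rdiv_le_0_compat; lra. }
  destruct (nfloor_ex _ HX) as [n Hn].
  set (N := S n).
  assert (HN : (T + d - c) / del < INR N) by (unfold N; rewrite S_INR; lra).
  assert (HNp : 0 < INR N) by (unfold N; apply lt_0_INR; lia).
  assert (HN' : T + d - c < del * INR N).
  { apply (Rmult_lt_compat_l del) in HN; auto.
    unfold Rdiv in HN. rewrite <- Rmult_assoc, (Rmult_comm del), Rmult_assoc, Rinv_r in HN; lra. }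
  exists (Rabs (f 0 0) + INR N).
  intros t x Ht Hx.
  assert (Hk : forall k, (k <= N)%nat ->
     Rabs (f (t * (INR k / INR N)) (x * (INR k / INR N))) <= Rabs (f 0 0) + INR k).
  { induction k as [|k IH]; intros Hk.
    - simpl. unfold Rdiv. rewrite Rmult_0_l, !Rmult_0_r. lra.
    - assert (IH' := IH ltac:(lia)).
      set (l := INR k / INR N).
      set (l' := INR (S k) / INR N).
      assert (Hl : 0 <= l <= 1).
      { unfold l. split. apply Rdiv_le_0_compat. apply pos_INR. auto.
        apply Rmult_le_reg_r with (INR N). auto. unfold Rdiv. rewrite Rmult_assoc, Rinv_l by lra.
        rewrite Rmult_1_r, Rmult_1_l. apply le_INR; lia. }
      assert (Hl' : 0 <= l' <= 1).
      { unfold l'. split. apply Rdiv_le_0_compat. apply pos_INR. auto.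
        apply Rmult_le_reg_r with (INR N). auto. unfold Rdiv. rewrite Rmult_assoc, Rinv_l by lra.
        rewrite Rmult_1_r, Rmult_1_l. apply le_INR; lia. }
      assert (Hll : l' - l = / INR N).
      { unfold l', l. rewrite S_INR. field. lra. }
      assert (Hd1 : Rabs (t * l' - t * l) < del).
      { replace (t * l' - t * l) with (t / INR N) by (unfold Rdiv; rewrite <- Hll; ring).
        rewrite Rabs_right. apply Rmult_lt_reg_r with (INR N); auto.
        unfold Rdiv. rewrite Rmult_assoc, Rinv_l by lra. lra.
        apply Rle_ge, Rdiv_le_0_compat; lra. }
      assert (Hd2 : Rabs (x * l' - x * l) < del).
      { replace (x * l' - x * l) with (x / INR N) by (unfold Rdiv; rewrite <- Hll; ring).
        unfold Rdiv. rewrite Rabs_mult, (Rabs_right (/ INR N)).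
        apply Rmult_lt_reg_r with (INR N); auto.
        rewrite Rmult_assoc, Rinv_l, Rmult_1_r by lra. apply Rabs_def1; lra.
        apply Rle_ge, Rlt_le, Rinv_0_lt_compat; lra. }
      assert (Hu := Hdel (t * l) (x * l) (t * l') (x * l')).
      assert (Rabs (f (t * l') (x * l') - f (t * l) (x * l)) < 1).
      { apply Hu; try nra. }
      rewrite S_INR.
      assert (Htri := Rabs_triang (f (t * l') (x * l') - f (t * l) (x * l)) (f (t * l) (x * l))).
      replace (f (t * l') (x * l') - f (t * l) (x * l) + f (t * l) (x * l)) with (f (t * l') (x * l')) in Htri by ring.
      fold l in IH'. lra. }
  specialize (Hk N (le_n N)).
  unfold Rdiv in Hk. rewrite Rinv_r, !Rmult_1_r in Hk by lra. exact Hk.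
Qed.
Lemma cont_x (a : R -> R -> R) :
  (forall t x, 0 <= t -> continuous (fun p : R * R => a (fst p) (snd p)) (t, x)) ->
  forall t y, 0 <= t -> continuous (fun y => a t y) y.
Proof.
  intros Hc t y Ht.
  apply (continuous_comp_2 (fun _ => t) (fun y => y) a).
  apply continuous_const. apply continuous_id. apply Hc; auto.
Qed.

Lemma RInt_abs_bound (g : R -> R) (B u v : R) :
  (forall x, continuous g x) -> (forall x, Rmin u v <= x <= Rmax u v -> Rabs (g x) <= B) ->
  Rabs (RInt g u v) <= B * Rabs (v - u).
Proof.
  intros Hg Hb.
  destruct (Rle_or_lt u v) as [Huv|Huv].
  - rewrite Rmin_left, Rmax_right in Hb by lra.
    rewrite (Rabs_right (v - u)) by lra.
    rewrite Rmult_comm. apply abs_RInt_le_const; auto.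
    apply (ex_RInt_continuous (V := R_CompleteNormedModule)); intros; apply Hg.
  - rewrite Rmin_right, Rmax_left in Hb by lra.
    rewrite (Rabs_left (v - u)) by lra.
    rewrite <- opp_RInt_swap. 2: apply (ex_RInt_continuous (V := R_CompleteNormedModule)); intros; apply Hg.
    change (Rabs (- RInt g v u) <= B * - (v - u)).
    rewrite Rabs_Ropp. replace (B * - (v - u)) with ((u - v) * B) by ring.
    apply abs_RInt_le_const; auto. lra.
    apply (ex_RInt_continuous (V := R_CompleteNormedModule)); intros; apply Hg.
Qed.

Lemma F_bounds (g : R -> R) (B : R) :
  (forall x, continuous g x) -> RInt g (-PI) PI = 0 ->
  (forall x, -PI <= x <= PI -> g (-x) = g x) ->
  (forall x, -PI <= x <= PI -> Rabs (g x) <= B) ->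
  forall z, -PI <= z <= PI ->
  Rabs (RInt g (-PI) z) <= B * Rabs z /\ Rabs (RInt g (-PI) z) <= B * (PI - Rabs z).
Proof.
  intros Hg H0 Hev Hb z Hz.
  assert (HPI := PI_RGT_0).
  assert (Hex : forall u v, ex_RInt g u v) by (intros; apply (ex_RInt_continuous (V := R_CompleteNormedModule)); intros; apply Hg).
  assert (Hhalf : RInt g (-PI) 0 = RInt g 0 PI).
  { assert (Hl := RInt_comp_lin g (-1) 0 0 PI (Hex _ _)).
    replace (-1 * 0 + 0) with 0 in Hl by ring.
    replace (-1 * PI + 0) with (-PI) in Hl by ring.
    rewrite (RInt_ext _ (fun y => opp (g y))) in Hl.
    2: { intros x Hx. rewrite Rmin_left, Rmax_right in Hx by lra.
         replace (-1 * x + 0) with (-x) by ring. rewrite Hev by lra.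
         change (-1 * g x = - g x). ring. }
    rewrite (RInt_opp (V := R_CompleteNormedModule)) in Hl by apply Hex.
    rewrite <- (opp_RInt_swap (V := R_CompleteNormedModule) g (-PI) 0) in Hl by apply Hex.
    change (- RInt g 0 PI = - RInt g (-PI) 0) in Hl. lra. }
  assert (Hzero : RInt g (-PI) 0 = 0).
  { rewrite <- (RInt_Chasles g (-PI) 0 PI) in H0 by apply Hex.
    change (RInt g (-PI) 0 + RInt g 0 PI = 0) in H0. lra. }
  assert (E1 : RInt g (-PI) z = RInt g 0 z).
  { rewrite <- (RInt_Chasles g (-PI) 0 z) by apply Hex.
    change (RInt g (-PI) 0 + RInt g 0 z = RInt g 0 z). lra. }
  assert (E2 : RInt g (-PI) z = - RInt g z PI).
  { rewrite <- (RInt_Chasles g (-PI) z PI) in H0 by apply Hex.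
    change (RInt g (-PI) z + RInt g z PI = 0) in H0. lra. }
  assert (Hbd : forall u v, -PI <= u <= PI -> -PI <= v <= PI -> Rabs (RInt g u v) <= B * Rabs (v - u)).
  { intros u v Hu Hv. apply RInt_abs_bound; auto. intros x Hx. apply Hb.
    split. apply Rle_trans with (Rmin u v). apply Rmin_glb; lra. lra.
    apply Rle_trans with (Rmax u v). lra. apply Rmax_lub; lra. }
  split.
  - rewrite E1. replace z with (z - 0) at 2 by ring. apply Hbd; lra.
  - destruct (Rle_or_lt 0 z) as [Hz0|Hz0].
    + rewrite E2, Rabs_Ropp, (Rabs_right z) by lra.
      replace (PI - z) with (Rabs (PI - z)) by (rewrite Rabs_right; lra).
      apply Hbd; lra.
    + rewrite (Rabs_left z) by lra.
      replace (PI - - z) with (Rabs (z - - PI)) by (rewrite Rabs_right; lra).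
      apply Hbd; lra.
Qed.
Lemma deriv_sq_c (z : R -> R) (s l c : R) : is_derive z s l ->
  is_derive (fun s => z s * z s - c) s (2 * z s * l).
Proof.
  intros H.
  assert (Hm := is_derive_mult z z s l l H H ltac:(intros; apply Rmult_comm)).
  assert (Hc := is_derive_const (K := R_AbsRing) (V := R_NormedModule) c s).
  assert (Hmm := is_derive_minus _ _ s _ _ Hm Hc).
  replace (2 * z s * l) with (minus (plus (mult l (z s)) (mult (z s) l)) zero).
  exact Hmm.
  unfold minus, plus, mult, zero, opp; simpl. ring.
Qed.
Lemma cont_of_derive (z : R -> R) (s l : R) : is_derive z s l -> continuity_pt z s.
Proof.
  intros H. apply continuity_pt_filterlim.
  apply (ex_derive_continuous (K := R_AbsRing) (V := R_NormedModule) z s). eexists; exact H.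
Qed.
Lemma exp_mono x y : x <= y -> exp x <= exp y.
Proof. intros [H|H]. left; apply exp_increasing; auto. subst; lra. Qed.

Theorem lemma6p1 (a : R -> R -> R) (mu : R) :
  is_global_solution a ->
  even_in_x a ->
  0 < mu ->
  converges_to_mu_cos a mu ->
  forall kappa0 delta : R, 0 < kappa0 -> 0 < delta < / mu ->
  exists kappa : R, 0 < kappa < kappa0 /\
    forall (z0 : R) (z : R -> R),
      0 < Rabs z0 <= kappa ->
      is_characteristic a z0 z ->
      forall t : R, 0 <= t <= (/ mu - delta) * ln (kappa0 / Rabs z0) ->
        Rabs (z t) <= kappa0.
Proof.
  intros Hsol Hev Hmu Hconv k0 d Hk0 Hd.
  destruct Hsol as [Hc [_ Hmean]].
  assert (HPI := PI_RGT_0).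
  assert (Hcx := cont_x a Hc).
  set (eps := mu * mu * d / 2).
  assert (Heps : 0 < eps) by (unfold eps; assert (0 < mu * mu * d) by (apply Rmult_lt_0_compat; nra); lra).
  destruct (Hconv eps Heps) as [T0 HT0].
  set (T := Rmax T0 0).
  assert (HT : 0 <= T) by apply Rmax_r.
  destruct (rect_bound a T (-PI) PI HT ltac:(lra)) as [M0 HM0].
  { intros t x Ht Hx. apply continuity_2d_pt_filterlim. apply Hc. lra. }
  set (M := Rmax M0 (mu + eps)).
  assert (HMpos : 0 <= M) by (apply Rle_trans with (mu + eps); [lra | apply Rmax_r]).
  assert (Hlate : forall t x, T <= t -> -PI <= x <= PI -> Rabs (a t x) <= mu + eps).
  { intros t x Ht Hx. assert (T0 <= t) by (apply Rle_trans with T; [apply Rmax_l | lra]).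
    specialize (HT0 t x H Hx). apply Rabs_le_between in HT0.
    apply Rabs_le_between. assert (Hcos := COS_bound x). nra. }
  assert (Hall : forall t x, 0 <= t -> -PI <= x <= PI -> Rabs (a t x) <= M).
  { intros t x Ht Hx. destruct (Rle_or_lt t T).
    - apply Rle_trans with M0. apply HM0; lra. apply Rmax_l.
    - apply Rle_trans with (mu + eps). apply Hlate; lra. apply Rmax_r. }
  assert (Fb : forall t B, 0 <= t -> (forall x, -PI <= x <= PI -> Rabs (a t x) <= B) ->
     forall y, -PI <= y <= PI ->
     Rabs (RInt (fun x => a t x) (-PI) y) <= B * Rabs y /\
     Rabs (RInt (fun x => a t x) (-PI) y) <= B * (PI - Rabs y)).
  { intros t B Ht HB y Hy. apply F_bounds.
    - intros x; apply Hcx; auto.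
    - apply Hmean; auto.
    - intros x Hx; apply Hev; auto.
    - exact HB.
    - exact Hy. }
  set (th := (mu + eps) * (/ mu - d)).
  assert (Hth : th = 1 - mu * d / 2 - eps * d).
  { unfold th, eps. field. lra. }
  assert (Hth1 : 0 < th < 1).
  { split. unfold th. apply Rmult_lt_0_compat; lra.
    rewrite Hth. assert (0 < mu * d) by nra. assert (0 < eps * d) by nra. lra. }
  set (kap := Rmin (k0 * exp (- (M * T) / (1 - th))) (Rmin (PI / 2) (k0 / 2))).
  assert (Hexp := exp_pos (- (M * T) / (1 - th))).
  assert (Hkap : 0 < kap).
  { unfold kap. apply Rmin_glb_lt. nra. apply Rmin_glb_lt; lra. }
  assert (Hkap2 : kap <= k0 / 2) by (unfold kap; eapply Rle_trans; [apply Rmin_r | apply Rmin_r]).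
  assert (Hkap3 : kap <= PI / 2) by (unfold kap; eapply Rle_trans; [apply Rmin_r | apply Rmin_l]).
  assert (Hkap1 : kap <= k0 * exp (- (M * T) / (1 - th))) by apply Rmin_l.
  exists kap. split. split. lra. lra.
  intros z0 z Hz0 [Hzi Hzd] t Ht.
  set (F := fun s => RInt (fun x => a s x) (-PI) (z s)).
  assert (Hsq : forall y, y * y = Rabs y * Rabs y).
  { intros y. assert (Hs := Rsqr_abs y). unfold Rsqr in Hs. exact Hs. }
  assert (HA : forall s, 0 <= s -> Rabs (z s) <= PI).
  { intros s1 Hs1. destruct (Rle_or_lt (Rabs (z s1)) PI) as [|Hgt]; auto. exfalso.
    set (w := fun s => PI * PI - z s * z s).
    destruct (first_zero w s1 Hs1) as [s [Hs [Hws Hwr]]].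
    - intros r Hr. unfold w. apply continuity_pt_minus. apply continuity_pt_const. intros u v; auto.
      apply continuity_pt_mult; eapply cont_of_derive; apply Hzd; lra.
    - unfold w. rewrite Hzi. rewrite (Hsq z0). assert (Habs := Rabs_pos z0). assert (Rabs z0 <= PI/2) by lra. nra.
    - unfold w. rewrite (Hsq (z s1)). assert (Habs := Rabs_pos (z s1)). nra.
    - assert (Hin : forall r, 0 <= r <= s -> Rabs (z r) <= PI).
      { intros r Hr. destruct (Rlt_or_le r s) as [Hrs|Hrs].
        - specialize (Hwr r (conj (proj1 Hr) Hrs)). unfold w in Hwr. rewrite (Hsq (z r)) in Hwr.
          assert (Habs := Rabs_pos (z r)). nra.
        - replace r with s by lra. unfold w in Hws. rewrite (Hsq (z s)) in Hws.
          assert (Habs := Rabs_pos (z s)). nra. }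
      assert (G := gron (fun r => z r * z r - PI * PI) (fun r => 2 * z r * F r) (2 * M) 0 s
         ltac:(lra)).
      assert (Hg : (z s * z s - PI * PI) * exp (2 * M * (s - 0)) <= z 0 * z 0 - PI * PI).
      { apply G.
        - intros r Hr. apply deriv_sq_c. apply Hzd. lra.
        - intros r Hr. assert (Hzr := Hin r Hr).
          destruct (Fb r M ltac:(lra) ltac:(intros; apply Hall; lra) (z r) ltac:(apply Rabs_le_between; lra)) as [_ Hb2].
          fold (F r) in Hb2.
          assert (H1 : z r * F r <= Rabs (z r) * Rabs (F r)) by (rewrite <- Rabs_mult; apply Rle_abs).
          assert (H2 : Rabs (z r) * Rabs (F r) <= Rabs (z r) * (M * (PI - Rabs (z r)))).
          { apply Rmult_le_compat_l. apply Rabs_pos. auto. }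
          rewrite (Hsq (z r)). assert (Habs := Rabs_pos (z r)).
          assert (0 <= M * (PI - Rabs (z r)) * PI) by (apply Rmult_le_pos; [apply Rmult_le_pos|]; lra).
          nra. }
      unfold w in Hws. rewrite Hzi in Hg.
      assert (z s * z s - PI * PI = 0) by lra. rewrite H, Rmult_0_l in Hg.
      rewrite (Hsq z0) in Hg. assert (Habs := Rabs_pos z0). assert (Rabs z0 <= PI/2) by lra. assert (He := exp_pos (2 * M * (s - 0))). nra. }
  assert (HB : forall p q L, 0 <= p <= q ->
            (forall r x, p <= r <= q -> -PI <= x <= PI -> Rabs (a r x) <= L) ->
            z q * z q <= z p * z p * exp (2 * L * (q - p))).
  { intros p q L Hpq HL.
    assert (G := gron (fun r => z r * z r - 0) (fun r => 2 * z r * F r) (- (2 * L)) p q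
         ltac:(lra)).
    assert (Hg : (z q * z q - 0) * exp (- (2 * L) * (q - p)) <= z p * z p - 0).
    { apply G.
      - intros r Hr. apply deriv_sq_c. apply Hzd. lra.
      - intros r Hr. assert (Hzr := HA r ltac:(lra)).
        destruct (Fb r L ltac:(lra) ltac:(intros; apply HL; lra) (z r) ltac:(apply Rabs_le_between; lra)) as [Hb1 _].
        fold (F r) in Hb1.
        assert (H1 : z r * F r <= Rabs (z r) * Rabs (F r)) by (rewrite <- Rabs_mult; apply Rle_abs).
        assert (H2 : Rabs (z r) * Rabs (F r) <= Rabs (z r) * (L * Rabs (z r))).
        { apply Rmult_le_compat_l. apply Rabs_pos. auto. }
        rewrite (Hsq (z r)). nra. }
    replace (- (2 * L) * (q - p)) with (- (2 * L * (q - p))) in Hg by ring.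
    rewrite exp_Ropp in Hg.
    assert (He := exp_pos (2 * L * (q - p))).
    apply Rmult_le_compat_r with (r := exp (2 * L * (q - p))) in Hg; [|lra].
    rewrite Rmult_assoc, Rinv_l in Hg by lra. lra. }
  assert (Hbound : z t * z t <= z0 * z0 * exp (2 * M * T) * exp (2 * (mu + eps) * t)).
  { assert (He1 : 1 <= exp (2 * (mu + eps) * t)).
    { rewrite <- exp_0. apply exp_mono. nra. }
    assert (He2 := exp_pos (2 * M * T)).
    assert (Hz2 : 0 <= z0 * z0) by nra.
    destruct (Rle_or_lt t T) as [HtT|HtT].
    - assert (H1 := HB 0 t M ltac:(lra) ltac:(intros; apply Hall; lra)).
      rewrite Hzi in H1.
      assert (exp (2 * M * (t - 0)) <= exp (2 * M * T)) by (apply exp_mono; nra).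
      apply Rle_trans with (1 := H1).
      apply Rle_trans with (z0 * z0 * exp (2 * M * T)).
      apply Rmult_le_compat_l; auto.
      rewrite <- (Rmult_1_r (z0 * z0 * exp (2 * M * T))) at 1.
      apply Rmult_le_compat_l. apply Rmult_le_pos; lra. exact He1.
    - assert (H1 := HB 0 T M ltac:(lra) ltac:(intros; apply Hall; lra)).
      assert (H2 := HB T t (mu + eps) ltac:(lra) ltac:(intros; apply Hlate; lra)).
      rewrite Hzi in H1.
      replace (T - 0) with T in H1 by ring.
      assert (exp (2 * (mu + eps) * (t - T)) <= exp (2 * (mu + eps) * t)) by (apply exp_mono; nra).
      assert (He3 := exp_pos (2 * (mu + eps) * (t - T))).
      assert (0 <= z T * z T) by nra.
      nra. }
  assert (Hz0pos : 0 < Rabs z0) by lra.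
  set (l := ln (k0 / Rabs z0)).
  assert (Hl : l = ln k0 - ln (Rabs z0)) by (unfold l; apply ln_div; lra).
  assert (Hlz : ln (Rabs z0) <= ln k0 - M * T / (1 - th)).
  { apply Rle_trans with (ln (k0 * exp (- (M * T) / (1 - th)))).
    apply ln_le; lra. rewrite ln_mult, ln_exp by lra. unfold Rdiv. lra. }
  assert (HMT : M * T <= (1 - th) * l).
  { assert (M * T / (1 - th) <= l) by lra.
    apply Rmult_le_compat_l with (r := 1 - th) in H; [|lra].
    unfold Rdiv in H. rewrite <- Rmult_assoc, (Rmult_comm (1 - th)), Rmult_assoc, Rinv_r, Rmult_1_r in H by lra.
    lra. }
  assert (Hmt : (mu + eps) * t <= th * l).
  { unfold th. rewrite Rmult_assoc. apply Rmult_le_compat_l. lra. unfold l; lra. }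
  assert (HA2 : ln (Rabs z0) + M * T + (mu + eps) * t <= ln k0) by nra.
  assert (Hfin : Rabs (z t) * Rabs (z t) <= k0 * k0).
  { rewrite <- (Hsq (z t)). apply Rle_trans with (1 := Hbound).
    assert (HE : exp (2 * (ln (Rabs z0) + M * T + (mu + eps) * t)) <= exp (2 * ln k0))
      by (apply exp_mono; lra).
    clear HA2. rename HE into HA2.
    - replace (2 * (ln (Rabs z0) + M * T + (mu + eps) * t)) with
        (ln (Rabs z0) + ln (Rabs z0) + 2 * M * T + 2 * (mu + eps) * t) in HA2 by ring.
      replace (2 * ln k0) with (ln k0 + ln k0) in HA2 by ring.
      rewrite !exp_plus, !exp_ln in HA2 by lra.
      rewrite (Hsq z0). lra. }
  assert (Habs := Rabs_pos (z t)). nra.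
Qed.
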